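(* Let $C\subset\mathbb{R}^p$ be a closed convex pointed cone containing $0$ with nonempty interior such that $P\subset\mathrm{int}(C)\cup\{0\}$. If $K\in\mathcal{K}(C,P)$, then $\mathcal{E}(K,P)=\mathcal{PE}(K,P)$.
   Context: $P\subset\mathbb{R}^p$ is a closed convex pointed cone containing $0$ with nonempty interior. For nonempty $S\subset\mathbb{R}^p$ and such a cone $Q$, $\mathcal{E}(S,Q)=\{y\in S:(y-Q)\cap S=\{y\}\}$. Contingent cone of $S$ at $y\in S$: $T_S(y)=\{v:\exists h_k\to0^+,\exists v_k\to v,y+h_kv_k\in S\}$. Properly minimal elements: $\mathcal{PE}(S,P)=\{y\in\mathcal{E}(S,P): T_{S+P}(y)\cap(-P)=\{0\}\}$. $\mathcal{K}(C,P)$ is the set of nonempty compact $K\subset\mathbb{R}^p$ with $\mathcal{E}(K,P)=\mathcal{E}(K,C)$. *)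

(* Defs.v *)
From Stdlib Require Import Reals Classical FunctionalExtensionality.
From Stdlib Require Vectors.Fin.
Open Scope R_scope.

Definition vec (p : nat) : Type := Fin.t p -> R.

Definition vadd {p} (x y : vec p) : vec p := fun i => x i + y i.
Definition vsub {p} (x y : vec p) : vec p := fun i => x i - y i.
Definition vscal {p} (a : R) (x : vec p) : vec p := fun i => a * x i.
Definition vzero {p} : vec p := fun _ => 0.

Fixpoint fsum (p : nat) : (Fin.t p -> R) -> R :=
  match p return (Fin.t p -> R) -> R with
  | O => fun _ => 0
  | S n => fun f => f Fin.F1 + fsum n (fun i => f (Fin.FS i))
  end.

Definition vnorm {p} (x : vec p) : R := sqrt (fsum p (fun i => x i * x i)).

Definition set (p : nat) := vec p -> Prop.

Definition is_open {p} (S : set p) : Prop :=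
  forall x, S x -> exists e, e > 0 /\ forall y, vnorm (vsub y x) < e -> S y.
Definition is_closed {p} (S : set p) : Prop :=
  is_open (fun x => ~ S x).
Definition bounded {p} (S : set p) : Prop :=
  exists M, forall x, S x -> vnorm x <= M.
(* Heine-Borel: compact = closed and bounded in R^p *)
Definition is_compact {p} (S : set p) : Prop := is_closed S /\ bounded S.
Definition nonempty {p} (S : set p) : Prop := exists x, S x.

Definition vinterior {p} (S : set p) : set p :=
  fun x => exists e, e > 0 /\ forall y, vnorm (vsub y x) < e -> S y.

Definition is_convex {p} (S : set p) : Prop :=
  forall x y t, S x -> S y -> 0 <= t <= 1 ->
    S (vadd (vscal t x) (vscal (1 - t) y)).
Definition is_cone {p} (S : set p) : Prop :=
  forall x t, S x -> 0 <= t -> S (vscal t x).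
Definition pointed {p} (S : set p) : Prop :=
  forall x, S x -> S (vscal (-1) x) -> x = vzero.

Definition good_cone {p} (Q : set p) : Prop :=
  is_closed Q /\ is_convex Q /\ is_cone Q /\ pointed Q /\ Q vzero /\
  nonempty (vinterior Q).

Definition minimal_set {p} (S Q : set p) : set p :=
  fun y => S y /\
    forall z, (S z /\ exists q, Q q /\ z = vsub y q) <-> z = y.

Definition msum {p} (S Q : set p) : set p :=
  fun z => exists s q, S s /\ Q q /\ z = vadd s q.

Definition seq_cv {p} (u : nat -> vec p) (l : vec p) : Prop :=
  forall e, e > 0 -> exists N, forall n, (n >= N)%nat -> vnorm (vsub (u n) l) < e.

Definition contingent {p} (S : set p) (y : vec p) : set p :=
  fun v => exists (h : nat -> R) (w : nat -> vec p),
    (forall k, h k > 0) /\ Un_cv h 0 /\ seq_cv w v /\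
    forall k, S (vadd y (vscal (h k) (w k))).

Definition proper_minimal_set {p} (S P : set p) : set p :=
  fun y => minimal_set S P y /\
    forall v, (contingent (msum S P) y v /\ P (vscal (-1) v)) <-> v = vzero.

Definition Kfam {p} (C P : set p) (K : set p) : Prop :=
  nonempty K /\ is_compact K /\
  forall y, minimal_set K P y <-> minimal_set K C y.

(* Main.v *)
Require Import Defs.
From Stdlib Require Import Reals.
From Stdlib Require Import ZArith Lra Lia Classical FunctionalExtensionality.
From Stdlib Require Vectors.Fin.
Open Scope R_scope.

Lemma fsum_nonneg (p : nat) (f : Fin.t p -> R) :
  (forall i, 0 <= f i) -> 0 <= fsum p f.
Proof.
  revert f; induction p as [|n IH]; intros f Hf; simpl; [lra|].
  pose proof (Hf Fin.F1). pose proof (IH (fun i => f (Fin.FS i)) (fun i => Hf _)). lra.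
Qed.

Lemma fsum_zero_each (p : nat) (f : Fin.t p -> R) :
  (forall i, 0 <= f i) -> fsum p f = 0 -> forall i, f i = 0.
Proof.
  revert f; induction p as [|n IH]; intros f Hf H0 i.
  - inversion i.
  - simpl in H0.
    pose proof (Hf Fin.F1).
    pose proof (fsum_nonneg n (fun i => f (Fin.FS i)) (fun i => Hf _)).
    pattern i; apply Fin.caseS'.
    + lra.
    + intro j. apply (IH (fun i => f (Fin.FS i)) (fun i => Hf _)). lra.
Qed.

Lemma fsum_zero (p : nat) : fsum p (fun _ => 0) = 0.
Proof. induction p; simpl; [lra| rewrite IHp; lra]. Qed.

Lemma vnorm_self {p} (x : vec p) : vnorm (vsub x x) = 0.
Proof.
  unfold vnorm, vsub.
  replace (fun i : Fin.t p => (x i - x i) * (x i - x i)) with (fun _ : Fin.t p => 0)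
    by (apply functional_extensionality; intro; ring).
  rewrite fsum_zero. apply sqrt_0.
Qed.

Lemma vnorm_small_zero {p} (u : vec p) :
  (forall e, e > 0 -> vnorm u < e) -> forall i, u i = 0.
Proof.
  intros H i.
  set (s := fsum p (fun i => u i * u i)).
  assert (Hs : 0 <= s) by (apply fsum_nonneg; intro; apply Rle_0_sqr).
  assert (Hq : sqrt s = 0).
  { destruct (Rle_lt_or_eq_dec 0 (sqrt s) (sqrt_pos s)) as [Hl|Hl]; [|auto].
    specialize (H _ Hl). unfold vnorm in H. fold s in H. lra. }
  apply sqrt_eq_0 in Hq; [|exact Hs].
  pose proof (fsum_zero_each p (fun i => u i * u i) (fun i => Rle_0_sqr _) Hq i).
  simpl in H0. destruct (Rmult_integral _ _ H0); auto.
Qed.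

Lemma cone_add {p} (C : set p) : is_convex C -> is_cone C ->
  forall a b, C a -> C b -> C (vadd a b).
Proof.
  intros Hcv Hco a b Ha Hb.
  pose proof (Hco _ 2 (Hcv a b (1/2) Ha Hb ltac:(lra)) ltac:(lra)) as H.
  replace (vadd a b) with (vscal 2 (vadd (vscal (1 / 2) a) (vscal (1 - 1 / 2) b))); auto.
  apply functional_extensionality; intro; unfold vscal, vadd; field.
Qed.

Lemma inv_cv : Un_cv (fun k => / (INR k + 1)) 0.
Proof.
  intros e He.
  destruct (archimed (/ e)) as [H1 _].
  assert (Hz : (0 <= up (/ e))%Z).
  { apply le_IZR. pose proof (Rinv_0_lt_compat e He). lra. }
  exists (Z.to_nat (up (/ e))). intros n Hn.
  unfold Rdist. rewrite Rminus_0_r.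
  assert (HI : 0 < INR n + 1) by (pose proof (pos_INR n); lra).
  rewrite Rabs_right by (left; apply Rinv_0_lt_compat; lra).
  apply le_INR in Hn. rewrite INR_IZR_INZ, Z2Nat.id in Hn by auto.
  apply (Rmult_lt_reg_l (INR n + 1)); [lra|].
  rewrite Rinv_r by lra.
  apply (Rmult_lt_reg_l (/ e)); [apply Rinv_0_lt_compat; lra|].
  replace (/ e * ((INR n + 1) * e)) with (INR n + 1) by (field; lra).
  lra.
Qed.

Theorem proposition4p14 (p : nat) (P C K : set p) :
  good_cone P -> good_cone C ->
  (forall y, P y -> vinterior C y \/ y = vzero) ->
  Kfam C P K ->
  forall y, minimal_set K P y <-> proper_minimal_set K P y.
Proof.
  intros [_ [_ [_ [_ [P0 _]]]]] [_ [Ccv [Cco [Cpt [C0 _]]]]] HPC [_ [_ HK]] y.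
  assert (PC : forall x, P x -> C x).
  { intros x Hx. destruct (HPC x Hx) as [[e [he hb]]| Hx0]; [|rewrite Hx0]; auto.
    apply hb. rewrite vnorm_self. lra. }
  split; [|intros [H _]; exact H].
  intro hm. split; [exact hm|]. intro v; split.
  - intros [[h [w [hpos [hcv [wcv hin]]]]] hPv].
    assert (hmC := proj1 (HK y) hm).
    assert (Hvv : v = vscal (-1) (vscal (-1) v)).
    { apply functional_extensionality; intro; unfold vscal; ring. }
    destruct (HPC _ hPv) as [[e [he hb]]|H0].
    2:{ rewrite Hvv, H0. apply functional_extensionality; intro; unfold vscal, vzero; ring. }
    destruct (wcv e he) as [N1 HN1].
    assert (Claim : forall k, (k >= N1)%nat -> forall i, w k i = 0).
    { intros k Hk.
      destruct (hin k) as [s [q [Ks [Pq Eq]]]].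
      assert (Cnw : C (vscal (-1) (w k))).
      { apply hb.
        replace (vsub (vscal (-1) (w k)) (vscal (-1) v)) with (vscal (-1) (vsub (w k) v))
          by (apply functional_extensionality; intro; unfold vscal, vsub; ring).
        specialize (HN1 k Hk). unfold vnorm in *.
        replace (fun i : Fin.t p => vscal (-1) (vsub (w k) v) i * vscal (-1) (vsub (w k) v) i)
          with (fun i : Fin.t p => vsub (w k) v i * vsub (w k) v i)
          by (apply functional_extensionality; intro; unfold vscal; ring).
        exact HN1. }
      assert (Eqi : forall i, y i + h k * w k i = s i + q i).
      { intro i. pose proof (equal_f Eq i) as E. unfold vadd, vscal in E. exact E. }
      assert (Cys : C (vsub y s)).
      { replace (vsub y s) with (vadd (vscal (h k) (vscal (-1) (w k))) q).
        - apply cone_add; auto. apply Cco; auto. left; apply hpos.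
        - apply functional_extensionality; intro i; unfold vadd, vscal, vsub.
          pose proof (Eqi i). lra. }
      assert (Hsy : s = y).
      { apply (proj2 hmC s). split; auto. exists (vsub y s). split; auto.
        apply functional_extensionality; intro; unfold vsub; ring. }
      subst s.
      assert (Hq : q = vscal (h k) (w k)).
      { apply functional_extensionality; intro i; unfold vscal. pose proof (Eqi i). lra. }
      subst q.
      assert (Z : vscal (h k) (w k) = vzero).
      { apply Cpt; auto.
        replace (vscal (-1) (vscal (h k) (w k))) with (vscal (h k) (vscal (-1) (w k)))
          by (apply functional_extensionality; intro; unfold vscal; ring).
        apply Cco; auto. left; apply hpos. }
      intro i. pose proof (equal_f Z i) as Zi. unfold vscal, vzero in Zi.
      pose proof (hpos k).
      destruct (Rmult_integral _ _ Zi); [lra|auto]. }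
    assert (Hv : forall i, vsub vzero v i = 0).
    { apply vnorm_small_zero. intros e' he'.
      destruct (wcv e' he') as [N2 HN2].
      specialize (HN2 (max N1 N2) ltac:(lia)).
      replace (w (max N1 N2)) with (@vzero p) in HN2; auto.
      apply functional_extensionality; intro i; unfold vzero.
      symmetry; apply Claim; lia. }
    apply functional_extensionality; intro i. pose proof (Hv i) as Hi.
    unfold vsub, vzero in *. lra.
  - intros ->. split.
    + exists (fun k => / (INR k + 1)), (fun _ => vzero). split; [|split; [|split]].
      * intro k. apply Rinv_0_lt_compat. pose proof (pos_INR k); lra.
      * apply inv_cv.
      * intros e he. exists O. intros. rewrite vnorm_self. lra.
      * intro k. exists y, vzero. refine (conj (proj1 hm) (conj P0 _)).
        apply functional_extensionality; intro; unfold vadd, vscal, vzero; ring.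
    + replace (vscal (-1) (@vzero p)) with (@vzero p); auto.
      apply functional_extensionality; intro; unfold vscal, vzero; ring.
Qed.
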